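(* Let $F$ be the elementary cellular automaton with rule number 152. For every nonempty finite word $u\in\{0,1\}^*$, the deterministic communication complexity of $\textsc{SInv}_{F,u}$ restricted to inputs of length $n$ is bounded by a constant independent of $n$.
   Context: An elementary cellular automaton (ECA) with rule number $N\in\{0,\dots,255\}$ is the map $F:\{0,1\}^{\mathbb Z}\to\{0,1\}^{\mathbb Z}$ given by $F(x)_i=f(x_{i-1},x_i,x_{i+1})$. Here the local rule $f:\{0,1\}^3\to\{0,1\}$ is determined by $N=\sum_{a,b,c\in\{0,1\}}2^{4a+2b+c}f(a,b,c)$. For a nonempty finite word $u$, $p_u\in\{0,1\}^{\mathbb Z}$ is defined by $(p_u)_i=u_{i\bmod |u|}$. For a finite word $x$, $p_u[x]$ is the configuration equal to $x$ on positions $0,\dots,|x|-1$ and to $p_u$ elsewhere. $\textsc{SInv}_{F,u}$ is the decision problem: on input a finite word $x$, decide whether there is an integer $w$ such that for all $t\ge0$ the set of positions where $F^t(p_u)$ and $F^t(p_u[x])$ differ is contained in an interval of length $w$. For each $n$, it is regarded as a function $\{0,1\}^n\to\{0,1\}$. For a function $g:X\times Y\to Z$, $D(g)$ is the minimal depth of a deterministic two-party protocol computing $g$. In such a protocol, Alice knows $x$ and Bob knows $y$. The protocol is a binary tree: each internal node is labelled by a function of Alice's input only or of Bob's input only, with values in $\{\text{left},\text{right}\}$, and each leaf is labelled by an output value. For $g:\{0,1\}^m\to Z$, set $D(g)=\max_{0\le i<m}D(g_i)$, where $g_i:\{0,1\}^i\times\{0,1\}^{m-i}\to Z$ is $g_i(x,y)=g(xy)$.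 *)

(* Defs.v *)
From Stdlib Require Import ZArith List Bool.
Import ListNotations.
Open Scope Z_scope.

Definition config := Z -> bool.

Definition local_rule (N : nat) (a b c : bool) : bool :=
  Nat.testbit N (4 * Nat.b2n a + 2 * Nat.b2n b + Nat.b2n c).

Definition eca (N : nat) (x : config) : config :=
  fun i => local_rule N (x (i - 1)) (x i) (x (i + 1)).

Definition eca_iter (N : nat) (t : nat) (x : config) : config :=
  Nat.iter t (eca N) x.

Definition periodic (u : list bool) : config :=
  fun i => nth (Z.to_nat (i mod Z.of_nat (length u))) u false.

Definition patch (u x : list bool) : config :=
  fun i => if (0 <=? i) && (i <? Z.of_nat (length x))
           then nth (Z.to_nat i) x false
           else periodic u i.

Definition SInv (N : nat) (u x : list bool) : Prop :=
  exists w : Z, forall t : nat, exists a : Z, forall i : Z,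
    eca_iter N t (periodic u) i <> eca_iter N t (patch u x) i ->
    a <= i <= a + w.

Inductive protocol (X Y : Type) : Type :=
| Leaf : bool -> protocol X Y
| NodeA : (X -> bool) -> protocol X Y -> protocol X Y -> protocol X Y
| NodeB : (Y -> bool) -> protocol X Y -> protocol X Y -> protocol X Y.
Arguments Leaf {X Y}.
Arguments NodeA {X Y}.
Arguments NodeB {X Y}.

Fixpoint run {X Y} (p : protocol X Y) (x : X) (y : Y) : bool :=
  match p with
  | Leaf z => z
  | NodeA f l r => if f x then run l x y else run r x y
  | NodeB g l r => if g y then run l x y else run r x y
  end.

Fixpoint depth {X Y} (p : protocol X Y) : nat :=
  match p with
  | Leaf _ => 0
  | NodeA _ l r => S (Nat.max (depth l) (depth r))
  | NodeB _ l r => S (Nat.max (depth l) (depth r))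
  end.

(* D(g_i) <= k for g_i : {0,1}^i x {0,1}^(m-i) -> bool, g given as a
   predicate on words of length m (output true iff predicate holds). *)
Definition D_split_le (g : list bool -> Prop) (m i k : nat) : Prop :=
  exists p : protocol (list bool) (list bool),
    (depth p <= k)%nat /\
    forall x y : list bool, length x = i -> length y = (m - i)%nat ->
      (run p x y = true <-> g (x ++ y)).

Definition D_le (g : list bool -> Prop) (m k : nat) : Prop :=
  forall i : nat, (i < m)%nat -> D_split_le g m i k.

(* Main.v *)
Require Import Defs.
From Stdlib Require Import ZArith List Bool Lia.
Import ListNotations.
Open Scope Z_scope.

Lemma rule_eq : forall a b c, local_rule 152 a b c = (b && c) || (a && negb b && negb c).
Proof. destruct a, b, c; reflexivity. Qed.

Lemma eca_eq : forall (c : config) i,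
  eca 152 c i = (c i && c (i+1)) || (c (i-1) && negb (c i) && negb (c (i+1))).
Proof. intros; unfold eca; apply rule_eq. Qed.

Lemma iter_S : forall N t c, eca_iter N (S t) c = eca N (eca_iter N t c).
Proof. reflexivity. Qed.

Lemma iter_add' : forall N a b c, eca_iter N (a + b) c = eca_iter N a (eca_iter N b c).
Proof. intros. unfold eca_iter. apply Nat.iter_add. Qed.

Lemma e11 : forall (c : config) i, c i = true -> c (i+1) = true -> eca 152 c i = true.
Proof. intros c i H1 H2. rewrite eca_eq, H1, H2. destruct (c (i-1)); reflexivity. Qed.
Lemma e01 : forall (c : config) i, c i = false -> c (i+1) = true -> eca 152 c i = false.
Proof. intros c i H1 H2. rewrite eca_eq, H1, H2. destruct (c (i-1)); reflexivity. Qed.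
Lemma e10 : forall (c : config) i, c i = true -> c (i+1) = false -> eca 152 c i = false.
Proof. intros c i H1 H2. rewrite eca_eq, H1, H2. destruct (c (i-1)); reflexivity. Qed.

Definition good (c : config) := forall i, c i = true -> c (i+1) = false /\ c (i+2) = false.

Lemma good_shift : forall c, good c -> forall i, eca 152 c i = c (i-1).
Proof.
  intros c Hg i. rewrite eca_eq.
  destruct (c (i-1)) eqn:E.
  - destruct (Hg _ E) as [H1 H2].
    replace (i-1+1) with i in H1 by ring. replace (i-1+2) with (i+1) in H2 by ring.
    rewrite H1, H2. reflexivity.
  - destruct (c i) eqn:Ei; simpl.
    + destruct (Hg _ Ei) as [H1 _]. rewrite H1. reflexivity.
    + reflexivity.
Qed.

Lemma good_eca : forall c, good c -> good (eca 152 c).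
Proof.
  intros c Hg i. rewrite !(good_shift c Hg). intro H.
  replace (i+1-1) with (i-1+1) by ring. replace (i+2-1) with (i-1+2) by ring.
  apply Hg; exact H.
Qed.

Lemma iter_good : forall d, good d -> forall t, good (eca_iter 152 t d).
Proof.
  intros d Hd t; induction t; [exact Hd|]. rewrite iter_S. apply good_eca; exact IHt.
Qed.

Lemma iter_shift : forall d, good d -> forall t i, eca_iter 152 t d i = d (i - Z.of_nat t).
Proof.
  intros d Hd t. induction t; intro i.
  - change (eca_iter 152 0 d i) with (d i). f_equal. lia.
  - rewrite iter_S, good_shift by (apply iter_good; exact Hd).
    rewrite IHt. f_equal. lia.
Qed.

Definition Q (k : nat) (c : config) :=
  forall i, exists j, i <= j <= i + Z.of_nat k /\ c j = false.

Lemma Q1_good : forall c, Q 1 c -> good (eca 152 c).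
Proof.
  intros c HQ i. rewrite !eca_eq. intro H.
  assert (H0 : forall j, c j && c (j+1) = false).
  { intro j. destruct (HQ j) as [k [Hk Hc]].
    assert (k = j \/ k = j+1) as [->| ->] by lia; rewrite Hc;
      try reflexivity; apply andb_false_r. }
  rewrite H0 in H. simpl in H.
  apply andb_prop in H as [H Hc]. apply andb_prop in H as [Ha Hb].
  apply negb_true_iff in Hb. apply negb_true_iff in Hc.
  rewrite !H0.
  replace (i+1-1) with i by ring. replace (i+2-1) with (i+1) by ring.
  rewrite Hb, Hc. split; reflexivity.
Qed.

Lemma find_edge : forall (c : config) n i, c i = true -> c (i + Z.of_nat (S n)) = false ->
  exists j, i <= j < i + Z.of_nat (S n) /\ c j = true /\ c (j+1) = false.
Proof.
  intros c n. induction n; intros i Hi Hn.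
  - exists i. split; [lia|]. split; auto.
  - destruct (c (i+1)) eqn:E.
    + destruct (IHn (i+1) E) as [j [Hj1 Hj2]].
      { replace (i+1+Z.of_nat (S n)) with (i + Z.of_nat (S (S n))) by lia. exact Hn. }
      exists j. split; [lia| exact Hj2].
    + exists i. split; [lia|]. auto.
Qed.

Lemma Q_step : forall k c, Q (S (S k)) c -> Q (S k) (eca 152 c).
Proof.
  intros k c HQ i.
  destruct (c i) eqn:Ei.
  - destruct (HQ i) as [j0 [Hj0 Hc0]].
    assert (Hne : j0 <> i) by (intro; subst; congruence).
    destruct (find_edge c (Z.to_nat (j0 - i - 1)) i Ei) as [j [Hj [Hcj Hcj1]]].
    { replace (i + Z.of_nat (S (Z.to_nat (j0 - i - 1)))) with j0 by lia. exact Hc0. }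
    exists j. split; [lia|]. apply e10; assumption.
  - destruct (c (i+1)) eqn:E1.
    + exists i. split; [lia|]. apply e01; assumption.
    + exists (i+1). split; [lia|]. rewrite eca_eq, E1.
      replace (i+1-1) with i by ring. rewrite Ei. reflexivity.
Qed.

Lemma Q_good : forall k c, Q (S k) c -> good (eca_iter 152 (S k) c).
Proof.
  induction k; intros c HQ.
  - apply Q1_good. exact HQ.
  - unfold eca_iter. rewrite Nat.iter_succ_r. apply IHk. apply Q_step. exact HQ.
Qed.

Lemma lightcone : forall (u x : list bool) t i,
  (i < - Z.of_nat t \/ Z.of_nat (length x) + Z.of_nat t <= i) ->
  eca_iter 152 t (periodic u) i = eca_iter 152 t (patch u x) i.
Proof.
  intros u x t. induction t; intros i Hi.
  - change (periodic u i = patch u x i). unfold patch.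
    destruct ((0 <=? i) && (i <? Z.of_nat (length x))) eqn:E; [|reflexivity].
    apply andb_prop in E as [E1 E2]. apply Z.leb_le in E1. apply Z.ltb_lt in E2. lia.
  - rewrite !iter_S, !eca_eq. rewrite !IHt by lia. reflexivity.
Qed.

Lemma periodic_zero : forall u z, (z < length u)%nat -> nth z u false = false ->
  forall i, exists j, i <= j <= i + Z.of_nat (length u) - 1 /\ periodic u j = false.
Proof.
  intros u z Hz Hn i.
  assert (Hn0 : 0 < Z.of_nat (length u)) by lia.
  exists (i + (Z.of_nat z - i) mod Z.of_nat (length u)).
  pose proof (Z.mod_pos_bound (Z.of_nat z - i) (Z.of_nat (length u)) Hn0).
  split; [lia|].
  unfold periodic.
  replace ((i + (Z.of_nat z - i) mod Z.of_nat (length u)) mod Z.of_nat (length u)) with (Z.of_nat z).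
  - rewrite Nat2Z.id. exact Hn.
  - rewrite Z.add_mod_idemp_r by lia.
    replace (i + (Z.of_nat z - i)) with (Z.of_nat z) by ring. rewrite Z.mod_small; lia.
Qed.

Lemma Q_patch : forall (u x : list bool) z (c : config), (z < length u)%nat -> nth z u false = false ->
  (forall i, (i < 0 \/ Z.of_nat (length x) <= i) -> c i = periodic u i) ->
  Q (length x + 2 * length u) c.
Proof.
  intros u x z c Hz Hn Hc i.
  assert (Hu : 0 < Z.of_nat (length u)) by lia.
  destruct (Z_lt_le_dec (i + Z.of_nat (length u)) 1) as [H1|H1].
  - destruct (periodic_zero u z Hz Hn i) as [j [Hj Hpj]]. exists j. split; [lia|].
    rewrite Hc by lia. exact Hpj.
  - destruct (Z_lt_le_dec i (Z.of_nat (length x))) as [H2|H2].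
    + destruct (periodic_zero u z Hz Hn (Z.of_nat (length x))) as [j [Hj Hpj]].
      exists j. split; [lia|]. rewrite Hc by lia. exact Hpj.
    + destruct (periodic_zero u z Hz Hn i) as [j [Hj Hpj]]. exists j. split; [lia|].
      rewrite Hc by lia. exact Hpj.
Qed.

Lemma sinv_zero : forall u z x, (z < length u)%nat -> nth z u false = false -> SInv 152 u x.
Proof.
  intros u z x Hz Hn.
  assert (Q1 : Q (length x + 2 * length u) (periodic u)) by (apply (Q_patch u x z); auto).
  assert (Q2 : Q (length x + 2 * length u) (patch u x)).
  { apply (Q_patch u x z); auto. intros i Hi. unfold patch.
    destruct ((0 <=? i) && (i <? Z.of_nat (length x))) eqn:E; [|reflexivity].
    apply andb_prop in E as [E1 E2]. apply Z.leb_le in E1. apply Z.ltb_lt in E2. lia. }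
  assert (HK : exists k, (length x + 2*length u)%nat = S k)
    by (exists (length x + 2*length u - 1)%nat; lia).
  destruct HK as [k HK]. rewrite HK in Q1, Q2.
  pose proof (Q_good k _ Q1) as G1. pose proof (Q_good k _ Q2) as G2.
  exists (Z.of_nat (length x) + 2 * Z.of_nat (S k)).
  intro t.
  destruct (le_lt_dec t (S k)) as [Ht|Ht].
  - exists (- Z.of_nat t). intros i Hi.
    destruct (Z_lt_le_dec i (- Z.of_nat t)) as [H|H]; [exfalso; apply Hi; apply lightcone; lia|].
    destruct (Z_lt_le_dec i (Z.of_nat (length x) + Z.of_nat t)) as [H'|H']; [lia|].
    exfalso; apply Hi; apply lightcone; lia.
  - exists (Z.of_nat (t - S k) - Z.of_nat (S k)). intros i Hi.
    replace t with ((t - S k) + S k)%nat in Hi by lia.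
    rewrite !iter_add' in Hi.
    rewrite (iter_shift _ G1), (iter_shift _ G2) in Hi.
    destruct (Z_lt_le_dec (i - Z.of_nat (t - S k)) (- Z.of_nat (S k))) as [H|H];
      [exfalso; apply Hi; apply lightcone; lia|].
    destruct (Z_lt_le_dec (i - Z.of_nat (t - S k)) (Z.of_nat (length x) + Z.of_nat (S k))) as [H'|H'];
      [lia|].
    exfalso; apply Hi; apply lightcone; lia.
Qed.

Lemma all_true_iter : forall c, (forall i, c i = true) -> forall t i, eca_iter 152 t c i = true.
Proof.
  intros c Hc t; induction t; intro i; [apply Hc|].
  rewrite iter_S. apply e11; apply IHt.
Qed.

Lemma periodic_true : forall u, (forall b, In b u -> b = true) -> u <> nil ->
  forall i, periodic u i = true.
Proof.
  intros u Hu Hne i. unfold periodic. apply Hu. apply nth_In.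
  assert (0 < length u)%nat by (destruct u; [congruence| simpl; lia]).
  pose proof (Z.mod_pos_bound i (Z.of_nat (length u)) ltac:(lia)). lia.
Qed.

Lemma first_zero : forall x, In false x -> exists l, (l < length x)%nat /\
  nth l x false = false /\ forall k, (k < l)%nat -> nth k x false = true.
Proof.
  induction x as [|b x IH]; intro H; [destruct H|].
  destruct b.
  - destruct H as [H|H]; [discriminate|].
    destruct (IH H) as [l [H1 [H2 H3]]]. exists (S l). simpl. split; [lia|]. split; [exact H2|].
    intros [|k] Hk; [reflexivity| apply H3; lia].
  - exists 0%nat. simpl. split; [lia|]. split; [reflexivity| intros; exfalso; lia].
Qed.

Lemma last_zero : forall x, In false x -> exists r, (r < length x)%nat /\
  nth r x false = false /\ forall k, (r < k < length x)%nat -> nth k x false = true.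
Proof.
  induction x as [|b x IH]; intro H; [destruct H|].
  destruct (in_dec bool_dec false x) as [Hx|Hx].
  - destruct (IH Hx) as [r [H1 [H2 H3]]]. exists (S r). simpl. split; [lia|]. split; [exact H2|].
    intros [|k] Hk; [exfalso; lia|]. apply H3. simpl in Hk. lia.
  - assert (b = false) by (destruct H; [auto| contradiction]). subst b.
    exists 0%nat. simpl. split; [lia|]. split; [reflexivity|].
    intros [|k] Hk; [exfalso; lia|]. simpl. destruct (nth k x false) eqn:E; [reflexivity|].
    exfalso. apply Hx. rewrite <- E. apply nth_In. simpl in Hk. lia.
Qed.

Lemma not_sinv_ones : forall u x, u <> nil -> (forall b, In b u -> b = true) ->
  In false x -> ~ SInv 152 u x.
Proof.
  intros u x Hne Hu Hx [w Hw].
  destruct (first_zero x Hx) as [l [Hl1 [Hl2 Hl3]]].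
  destruct (last_zero x Hx) as [r [Hr1 [Hr2 Hr3]]].
  assert (Hlr : (l <= r)%nat).
  { destruct (le_lt_dec l r); auto. rewrite Hl3 in Hr2 by lia. discriminate. }
  assert (Hp : forall i, periodic u i = true) by (apply periodic_true; auto).
  assert (HR : forall t, (forall i, Z.of_nat r < i -> eca_iter 152 t (patch u x) i = true)
     /\ eca_iter 152 t (patch u x) (Z.of_nat r) = false).
  { induction t.
    - split.
      + intros i Hi. change (patch u x i = true). unfold patch.
        destruct ((0 <=? i) && (i <? Z.of_nat (length x))) eqn:E; [|apply Hp].
        apply andb_prop in E as [E1 E2]. apply Z.leb_le in E1. apply Z.ltb_lt in E2.
        apply Hr3. lia.
      + change (patch u x (Z.of_nat r) = false). unfold patch.
        replace ((0 <=? Z.of_nat r) && (Z.of_nat r <? Z.of_nat (length x))) with true.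
        * rewrite Nat2Z.id. exact Hr2.
        * symmetry. apply andb_true_intro. split; [apply Z.leb_le | apply Z.ltb_lt]; lia.
    - destruct IHt as [IH1 IH2]. split.
      + intros i Hi. rewrite iter_S. apply e11; apply IH1; lia.
      + rewrite iter_S. apply e01; [exact IH2| apply IH1; lia].
  }
  assert (HL : forall t, (forall i, i < Z.of_nat l - Z.of_nat t -> eca_iter 152 t (patch u x) i = true)
     /\ eca_iter 152 t (patch u x) (Z.of_nat l - Z.of_nat t) = false).
  { induction t.
    - split.
      + intros i Hi. change (patch u x i = true). unfold patch.
        destruct ((0 <=? i) && (i <? Z.of_nat (length x))) eqn:E; [|apply Hp].
        apply andb_prop in E as [E1 E2]. apply Z.leb_le in E1. apply Z.ltb_lt in E2.
        apply Hl3. lia.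
      + change (patch u x (Z.of_nat l - Z.of_nat 0) = false). unfold patch.
        replace (Z.of_nat l - Z.of_nat 0) with (Z.of_nat l) by lia.
        replace ((0 <=? Z.of_nat l) && (Z.of_nat l <? Z.of_nat (length x))) with true.
        * rewrite Nat2Z.id. exact Hl2.
        * symmetry. apply andb_true_intro. split; [apply Z.leb_le | apply Z.ltb_lt]; lia.
    - destruct IHt as [IH1 IH2]. split.
      + intros i Hi. rewrite iter_S. apply e11; apply IH1; lia.
      + rewrite iter_S. apply e10; [apply IH1; lia|].
        replace (Z.of_nat l - Z.of_nat (S t) + 1) with (Z.of_nat l - Z.of_nat t) by lia.
        exact IH2.
  }
  destruct (Hw (S (Z.to_nat w))) as [a Ha].
  destruct (HL (S (Z.to_nat w))) as [_ HL2]. destruct (HR (S (Z.to_nat w))) as [_ HR2].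
  assert (Ho : forall i, eca_iter 152 (S (Z.to_nat w)) (periodic u) i = true)
    by (apply all_true_iter; exact Hp).
  assert (A1 := Ha (Z.of_nat l - Z.of_nat (S (Z.to_nat w)))).
  assert (A2 := Ha (Z.of_nat r)).
  rewrite Ho, HL2 in A1. rewrite Ho, HR2 in A2.
  specialize (A1 ltac:(congruence)). specialize (A2 ltac:(congruence)).
  lia.
Qed.

Lemma sinv_ones_iff : forall u x, u <> nil -> (forall b, In b u -> b = true) ->
  (SInv 152 u x <-> forallb (fun b => b) x = true).
Proof.
  intros u x Hne Hu.
  destruct (in_dec bool_dec false x) as [Hx|Hx].
  - split; intro H.
    + exfalso. exact (not_sinv_ones u x Hne Hu Hx H).
    + rewrite forallb_forall in H. specialize (H false Hx). discriminate.
  - assert (Hx' : forall b, In b x -> b = true) by (intros [|] Hb; [reflexivity| contradiction]).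
    split; intro H.
    + apply forallb_forall. exact Hx'.
    + assert (Hp : forall i, periodic u i = true) by (apply periodic_true; auto).
      assert (Hq : forall i, patch u x i = true).
      { intro j. unfold patch.
        destruct ((0 <=? j) && (j <? Z.of_nat (length x))) eqn:E; [|apply Hp].
        apply andb_prop in E as [E1 E2]. apply Z.leb_le in E1. apply Z.ltb_lt in E2.
        apply Hx'. apply nth_In. lia. }
      exists 0. intro t. exists 0. intros i Hi. exfalso. apply Hi.
      rewrite (all_true_iter _ Hp), (all_true_iter _ Hq). reflexivity.
Qed.

Theorem mainTheorem18 :
  forall u : list bool, u <> nil ->
  exists C : nat, forall n : nat, D_le (SInv 152 u) n C.
Proof.
  intros u Hne. exists 2%nat. intros n i Hi.
  destruct (in_dec bool_dec false u) as [Hu|Hu].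
  - destruct (In_nth u false false Hu) as [z [Hz Hnz]].
    exists (Leaf true). split; [simpl; lia|]. intros x y _ _. simpl.
    split; [intros _; apply (sinv_zero u z); auto | reflexivity].
  - assert (Hu' : forall b, In b u -> b = true) by (intros [|] Hb; [reflexivity| contradiction]).
    exists (NodeA (fun x => forallb (fun b => b) x)
             (NodeB (fun y => forallb (fun b => b) y) (Leaf true) (Leaf false)) (Leaf false)).
    split; [simpl; lia|]. intros x y _ _. rewrite sinv_ones_iff by auto. rewrite forallb_app. simpl.
    destruct (forallb (fun b => b) x), (forallb (fun b => b) y); simpl; tauto.
Qed.
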